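(* For every formula $\phi\in\mathbf{Fm}$, the maps $[\![\phi]\!]:\mathsf{F}_{\mathbf{A}}(\mathbf{Fm})\to\mathbf{A}$ and $(\![\phi]\!):\mathsf{I}_{\mathbf{A}}(\mathbf{Fm})\to\mathbf{A}$ coincide with the maps $f\mapsto f(\phi)$ and $i\mapsto i(\phi)$, respectively.
   Context: Let $\mathbf{A}$ be a complete, frame-distributive and dually frame-distributive, commutative and associative residuated lattice with $1\to\alpha=\alpha$. Let $\mathbf{Fm}$ be the Lindenbaum–Tarski algebra of the basic normal non-distributive modal logic $\mathbf{L}$ over the language $\bot,\top,p,\wedge,\vee,\Box,\Diamond$. Let $\mathsf{F}_{\mathbf{A}}(\mathbf{Fm})$ (resp. $\mathsf{I}_{\mathbf{A}}(\mathbf{Fm})$) be the proper $\mathbf{A}$-filters $f$ ($f(\top)=1,f(\bot)=0$, $\wedge$-preserving) (resp. proper $\mathbf{A}$-ideals $i$: $i(\bot)=1,i(\top)=0$, $i(a\vee b)=i(a)\wedge i(b)$). Canonical model: $I(f,i)=\bigvee_\phi(f(\phi)\otimes i(\phi))$, $R_\Diamond(i,f)=\bigvee_\phi(f(\phi)\otimes i(\Diamond\phi))$, $R_\Box(f,i)=\bigvee_\phi(f(\Box\phi)\otimes i(\phi))$, $g^\uparrow(i)=\bigwedge_f(g(f)\to I(f,i))$, $u^\downarrow(f)=\bigwedge_i(u(i)\to I(f,i))$, and $V(p)=([\![p]\!],(\![p]\!))$ with $[\![p]\!](f)=f(p)$, $(\![p]\!)(i)=i(p)$. $V$ is extended to all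 formulas (writing $V(\phi)=([\![\phi]\!],(\![\phi]\!))$, extension and intension) by: $V(\top)=(\top^{\mathbf{A}^A},(\top^{\mathbf{A}^A})^\uparrow)$, $V(\bot)=((\top^{\mathbf{A}^X})^\downarrow,\top^{\mathbf{A}^X})$, $V(\phi\wedge\psi)=([\![\phi]\!]\wedge[\![\psi]\!],([\![\phi]\!]\wedge[\![\psi]\!])^\uparrow)$, $V(\phi\vee\psi)=(((\![\phi]\!)\wedge(\![\psi]\!))^\downarrow,(\![\phi]\!)\wedge(\![\psi]\!))$, $V(\Box\phi)=(R_\Box^{(0)}[(\![\phi]\!)],(R_\Box^{(0)}[(\![\phi]\!)])^\uparrow)$ with $R_\Box^{(0)}[u](f)=\bigwedge_i(u(i)\to R_\Box(f,i))$, and $V(\Diamond\phi)=((R_\Diamond^{(0)}[[\![\phi]\!]])^\downarrow,R_\Diamond^{(0)}[[\![\phi]\!]])$ with $R_\Diamond^{(0)}[g](i)=\bigwedge_f(g(f)\to R_\Diamond(i,f))$. *)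

(* Defs.v *)
Set Implicit Arguments.
Unset Strict Implicit.

Record cres_lattice := CResLattice {
  car :> Type;
  le : car -> car -> Prop;
  le_refl : forall a, le a a;
  le_trans : forall a b c, le a b -> le b c -> le a c;
  le_antisym : forall a b, le a b -> le b a -> a = b;
  sup : (car -> Prop) -> car;
  sup_ub : forall S a, S a -> le a (sup S);
  sup_least : forall S b, (forall a, S a -> le a b) -> le (sup S) b;
  inf : (car -> Prop) -> car;
  inf_lb : forall S a, S a -> le (inf S) a;
  inf_greatest : forall S b, (forall a, S a -> le b a) -> le b (inf S);
  tensor : car -> car -> car;
  impl : car -> car -> car;
  residuation : forall a b c, le (tensor a b) c <-> le a (impl b c)
}.

Section LatticeOps.
Variable A : cres_lattice.
Definition meet (a b : A) : A := inf (fun x => x = a \/ x = b).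
Definition join (a b : A) : A := sup (fun x => x = a \/ x = b).
Definition one : A := inf (fun _ => False).
Definition zero : A := sup (fun _ => False).

Definition frame_distributive : Prop :=
  forall (a : A) (S : A -> Prop),
    meet a (sup S) = sup (fun x => exists s, S s /\ x = meet a s).
Definition dually_frame_distributive : Prop :=
  forall (a : A) (S : A -> Prop),
    join a (inf S) = inf (fun x => exists s, S s /\ x = join a s).
Definition tensor_comm : Prop := forall a b : A, tensor a b = tensor b a.
Definition tensor_assoc : Prop :=
  forall a b c : A, tensor a (tensor b c) = tensor (tensor a b) c.
Definition one_impl : Prop := forall a : A, impl one a = a.

Definition good_lattice : Prop :=
  frame_distributive /\ dually_frame_distributive /\
  tensor_comm /\ tensor_assoc /\ one_impl.
End LatticeOps.

Inductive form (Var : Type) : Type :=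
  | FVar : Var -> form Var
  | FBot : form Var
  | FTop : form Var
  | FAnd : form Var -> form Var -> form Var
  | FOr  : form Var -> form Var -> form Var
  | FBox : form Var -> form Var
  | FDia : form Var -> form Var.
Arguments FBot {Var}.
Arguments FTop {Var}.

Inductive deriv (Var : Type) : form Var -> form Var -> Prop :=
  | d_id   : forall a, deriv a a
  | d_bot  : forall a, deriv FBot a
  | d_top  : forall a, deriv a FTop
  | d_orl  : forall a b, deriv a (FOr a b)
  | d_orr  : forall a b, deriv b (FOr a b)
  | d_andl : forall a b, deriv (FAnd a b) a
  | d_andr : forall a b, deriv (FAnd a b) b
  | d_boxtop : deriv FTop (FBox FTop)
  | d_diabot : deriv (FDia FBot) FBot
  | d_boxand : forall a b, deriv (FAnd (FBox a) (FBox b)) (FBox (FAnd a b))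
  | d_diaor  : forall a b, deriv (FDia (FOr a b)) (FOr (FDia a) (FDia b))
  | d_cut  : forall a b c, deriv a b -> deriv b c -> deriv a c
  | d_orE  : forall a b c, deriv a c -> deriv b c -> deriv (FOr a b) c
  | d_andI : forall a b c, deriv c a -> deriv c b -> deriv c (FAnd a b)
  | d_boxm : forall a b, deriv a b -> deriv (FBox a) (FBox b)
  | d_diam : forall a b, deriv a b -> deriv (FDia a) (FDia b).

(* Elements of the Lindenbaum-Tarski algebra Fm are classes of
   interderivable formulas; a map on Fm is a map on formulas that is
   invariant under interderivability. *)
Definition interderivable (Var : Type) (a b : form Var) : Prop :=
  deriv a b /\ deriv b a.

Section Canonical.
Variables (Var : Type) (A : cres_lattice).

Record filter := Filter {
  fval :> form Var -> A;
  f_resp : forall a b, interderivable a b -> fval a = fval b;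
  f_top : fval FTop = one A;
  f_bot : fval FBot = zero A;
  f_and : forall a b, fval (FAnd a b) = meet (fval a) (fval b)
}.

Record ideal := Ideal {
  ival :> form Var -> A;
  i_resp : forall a b, interderivable a b -> ival a = ival b;
  i_bot : ival FBot = one A;
  i_top : ival FTop = zero A;
  i_or : forall a b, ival (FOr a b) = meet (ival a) (ival b)
}.

Definition Ican (f : filter) (i : ideal) : A :=
  sup (fun x => exists phi, x = tensor (f phi) (i phi)).
Definition Rdia (i : ideal) (f : filter) : A :=
  sup (fun x => exists phi, x = tensor (f phi) (i (FDia phi))).
Definition Rbox (f : filter) (i : ideal) : A :=
  sup (fun x => exists phi, x = tensor (f (FBox phi)) (i phi)).

Definition up (g : filter -> A) (i : ideal) : A :=
  inf (fun x => exists f : filter, x = impl (g f) (Ican f i)).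
Definition down (u : ideal -> A) (f : filter) : A :=
  inf (fun x => exists i : ideal, x = impl (u i) (Ican f i)).

Definition Rbox0 (u : ideal -> A) (f : filter) : A :=
  inf (fun x => exists i : ideal, x = impl (u i) (Rbox f i)).
Definition Rdia0 (g : filter -> A) (i : ideal) : A :=
  inf (fun x => exists f : filter, x = impl (g f) (Rdia i f)).

(* The canonical valuation V, extended to all formulas:
   V phi = (extension [[phi]], intension (phi)). *)
Fixpoint V (phi : form Var) : (filter -> A) * (ideal -> A) :=
  match phi with
  | FVar p => (fun f : filter => fval f (FVar p), fun i : ideal => ival i (FVar p))
  | FTop => (fun _ => one A, up (fun _ => one A))
  | FBot => (down (fun _ => one A), fun _ => one A)
  | FAnd a b =>
      let g := fun f => meet (fst (V a) f) (fst (V b) f) in (g, up g)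
  | FOr a b =>
      let u := fun i => meet (snd (V a) i) (snd (V b) i) in (down u, u)
  | FBox a => let g := Rbox0 (snd (V a)) in (g, up g)
  | FDia a => let u := Rdia0 (fst (V a)) in (down u, u)
  end.

Definition ext (phi : form Var) : filter -> A := fst (V phi).
Definition intn (phi : form Var) : ideal -> A := snd (V phi).
End Canonical.

(* Main.v *)
Require Import Defs.
From Stdlib Require Import Classical.

Lemma le_one (A : cres_lattice) (a : A) : le a (one A).
Proof. apply inf_greatest. intros x []. Qed.

Lemma zero_le (A : cres_lattice) (a : A) : le (zero A) a.
Proof. apply sup_least. intros x []. Qed.

Lemma meet_l (A : cres_lattice) (a b : A) : le (meet a b) a.
Proof. apply inf_lb. left; reflexivity. Qed.

Lemma meet_r (A : cres_lattice) (a b : A) : le (meet a b) b.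
Proof. apply inf_lb. right; reflexivity. Qed.

Lemma meet_glb (A : cres_lattice) (a b c : A) : le c a -> le c b -> le c (meet a b).
Proof. intros H1 H2. apply inf_greatest. intros x [-> | ->]; assumption. Qed.

Lemma tensor_one_le (A : cres_lattice) (HA : good_lattice A) (b : A) :
  le (tensor (one A) b) b.
Proof.
  destruct HA as [_ [_ [Hc [_ Ho]]]].
  rewrite Hc. apply residuation. rewrite Ho. apply le_refl.
Qed.

Definition pr (A : cres_lattice) (P : Prop) : A := sup (fun x => x = one A /\ P).

Lemma pr_true (A : cres_lattice) (P : Prop) : P -> pr A P = one A.
Proof.
  intros H. apply le_antisym. apply le_one. apply sup_ub. split; auto.
Qed.

Lemma pr_false (A : cres_lattice) (P : Prop) : ~ P -> pr A P = zero A.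
Proof.
  intros H. apply le_antisym. apply sup_least. intros x [_ Hp]. contradiction.
  apply zero_le.
Qed.

Lemma pr_iff (A : cres_lattice) (P Q : Prop) : (P <-> Q) -> pr A P = pr A Q.
Proof.
  intros H. destruct (classic P) as [Hp|Hp].
  rewrite !pr_true; tauto.
  rewrite !pr_false; tauto.
Qed.

Lemma pr_and (A : cres_lattice) (P Q : Prop) : pr A (P /\ Q) = meet (pr A P) (pr A Q).
Proof.
  destruct (classic P) as [Hp|Hp]; destruct (classic Q) as [Hq|Hq].
  - rewrite !pr_true; auto. apply le_antisym. apply meet_glb; apply le_refl. apply le_one.
  - rewrite (@pr_false A (P/\Q)) by tauto. rewrite (@pr_false A (Q)) by tauto.
    apply le_antisym. apply zero_le. apply meet_r.
  - rewrite (@pr_false A (P/\Q)) by tauto. rewrite (@pr_false A (P)) by tauto.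
    apply le_antisym. apply zero_le. apply meet_l.
  - rewrite (@pr_false A (P/\Q)) by tauto. rewrite (@pr_false A (P)) by tauto.
    apply le_antisym. apply zero_le. apply meet_l.
Qed.

Lemma f_mono (Var : Type) (A : cres_lattice) (f : filter Var A) (a b : form Var) :
  deriv a b -> le (f a) (f b).
Proof.
  intros H. rewrite (f_resp f (a := a) (b := FAnd a b)).
  rewrite f_and. apply meet_r.
  split. apply d_andI. apply d_id. exact H. apply d_andl.
Qed.

Lemma i_anti (Var : Type) (A : cres_lattice) (i : ideal Var A) (a b : form Var) :
  deriv a b -> le (i b) (i a).
Proof.
  intros H. rewrite (i_resp i (a := b) (b := FOr a b)).
  rewrite i_or. apply meet_l.
  split. apply d_orr. apply d_orE. exact H. apply d_id.
Qed.

Definition pf (Var : Type) (A : cres_lattice) (c : form Var) (H : ~ deriv c FBot) : filter Var A.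
Proof.
  refine (@Filter Var A (fun a => pr A (deriv c a)) _ _ _ _).
  - intros a b [H1 H2]. apply pr_iff. split; intro; eapply d_cut; eauto.
  - apply pr_true. apply d_top.
  - apply pr_false. exact H.
  - intros a b. rewrite <- pr_and. apply pr_iff. split.
    + intros Hd. split; eapply d_cut; eauto; [apply d_andl | apply d_andr].
    + intros [H1 H2]. apply d_andI; auto.
Defined.

Definition pi (Var : Type) (A : cres_lattice) (c : form Var) (H : ~ deriv FTop c) : ideal Var A.
Proof.
  refine (@Ideal Var A (fun a => pr A (deriv a c)) _ _ _ _).
  - intros a b [H1 H2]. apply pr_iff. split; intro; eapply d_cut; eauto.
  - apply pr_true. apply d_bot.
  - apply pr_false. exact H.
  - intros a b. rewrite <- pr_and. apply pr_iff. split.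
    + intros Hd. split; eapply d_cut; eauto; [apply d_orl | apply d_orr].
    + intros [H1 H2]. apply d_orE; auto.
Defined.

Lemma up_eq (Var : Type) (A : cres_lattice) (HA : good_lattice A)
  (g : filter Var A -> A) (c : form Var) (Hg : forall f, g f = f c) (i : ideal Var A) :
  up g i = i c.
Proof.
  pose proof HA as [_ [_ [Hc [_ Ho]]]].
  apply le_antisym.
  - destruct (classic (deriv c FBot)) as [H|H].
    + rewrite (i_resp i (a := c) (b := FBot)). rewrite i_bot. apply le_one.
      split. exact H. apply d_bot.
    + eapply le_trans. apply inf_lb. exists (@pf _ A _ H). reflexivity.
      rewrite Hg. simpl. rewrite pr_true by apply d_id. rewrite Ho.
      apply sup_least. intros x [psi ->]. apply residuation. simpl.
      apply sup_least. intros x [-> Hd]. apply residuation.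
      eapply le_trans. apply tensor_one_le; auto. apply i_anti; auto.
  - apply inf_greatest. intros x [f ->]. rewrite Hg. apply residuation.
    rewrite Hc. apply sup_ub. exists c. reflexivity.
Qed.

Lemma down_eq (Var : Type) (A : cres_lattice) (HA : good_lattice A)
  (u : ideal Var A -> A) (c : form Var) (Hu : forall i, u i = i c) (f : filter Var A) :
  down u f = f c.
Proof.
  pose proof HA as [_ [_ [Hc [_ Ho]]]].
  apply le_antisym.
  - destruct (classic (deriv FTop c)) as [H|H].
    + rewrite (f_resp f (a := c) (b := FTop)). rewrite f_top. apply le_one.
      split. apply d_top. exact H.
    + eapply le_trans. apply inf_lb. exists (@pi _ A _ H). reflexivity.
      rewrite Hu. simpl. rewrite pr_true by apply d_id. rewrite Ho.
      apply sup_least. intros x [psi ->]. rewrite Hc. apply residuation. simpl.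
      apply sup_least. intros x [-> Hd]. apply residuation.
      eapply le_trans. apply tensor_one_le; auto. apply f_mono; auto.
  - apply inf_greatest. intros x [i ->]. rewrite Hu. apply residuation.
    apply sup_ub. exists c. reflexivity.
Qed.

Theorem mainTheorem2 (Var : Type) (A : cres_lattice) (HA : good_lattice A)
  (phi : form Var) :
  (forall f : filter Var A, ext phi f = f phi) /\
  (forall i : ideal Var A, intn phi i = i phi).
Proof.
  pose proof HA as [_ [_ [Hc [_ Ho]]]].
  unfold ext, intn.
  induction phi as [p | | | a [IHa1 IHa2] b [IHb1 IHb2] | a [IHa1 IHa2] b [IHb1 IHb2]
                   | a [IHa1 IHa2] | a [IHa1 IHa2]]; simpl.
  - split; reflexivity.
  - assert (Hu : forall i : ideal Var A, one A = i FBot) by (intros; rewrite i_bot; reflexivity).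
    split. intros f. apply down_eq; auto. exact Hu.
  - assert (Hg : forall f : filter Var A, one A = f FTop) by (intros; rewrite f_top; reflexivity).
    split. exact Hg. intros i. apply up_eq; auto.
  - assert (Hg : forall f : filter Var A, meet (fst (V A a) f) (fst (V A b) f) = f (FAnd a b)).
    { intros f. rewrite IHa1, IHb1, f_and. reflexivity. }
    split. exact Hg. intros i. apply up_eq; auto.
  - assert (Hu : forall i : ideal Var A, meet (snd (V A a) i) (snd (V A b) i) = i (FOr a b)).
    { intros i. rewrite IHa2, IHb2, i_or. reflexivity. }
    split. intros f. apply down_eq; auto. exact Hu.
  - assert (Hg : forall f : filter Var A, Rbox0 (snd (V A a)) f = f (FBox a)).
    { intros f. apply le_antisym.
      - destruct (classic (deriv FTop a)) as [H|H].
        + eapply le_trans. apply le_one. rewrite <- (f_top f). apply f_mono.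
          eapply d_cut. apply d_boxtop. apply d_boxm. exact H.
        + eapply le_trans. apply inf_lb. exists (@pi _ A _ H). reflexivity.
          rewrite IHa2. simpl. rewrite pr_true by apply d_id. rewrite Ho.
          apply sup_least. intros x [psi ->]. rewrite Hc. apply residuation. simpl.
          apply sup_least. intros x [-> Hd]. apply residuation.
          eapply le_trans. apply tensor_one_le; auto. apply f_mono. apply d_boxm. auto.
      - apply inf_greatest. intros x [i ->]. rewrite IHa2. apply residuation.
        apply sup_ub. exists a. reflexivity. }
    split. exact Hg. intros i. apply up_eq; auto.
  - assert (Hu : forall i : ideal Var A, Rdia0 (fst (V A a)) i = i (FDia a)).
    { intros i. apply le_antisym.
      - destruct (classic (deriv a FBot)) as [H|H].
        + eapply le_trans. apply le_one. rewrite <- (i_bot i). apply i_anti.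
          eapply d_cut. apply d_diam. exact H. apply d_diabot.
        + eapply le_trans. apply inf_lb. exists (@pf _ A _ H). reflexivity.
          rewrite IHa1. simpl. rewrite pr_true by apply d_id. rewrite Ho.
          apply sup_least. intros x [psi ->]. apply residuation. simpl.
          apply sup_least. intros x [-> Hd]. apply residuation.
          eapply le_trans. apply tensor_one_le; auto. apply i_anti. apply d_diam. auto.
      - apply inf_greatest. intros x [f ->]. rewrite IHa1. apply residuation.
        rewrite Hc. apply sup_ub. exists a. reflexivity. }
    split. intros f. apply down_eq; auto. exact Hu.
Qed.
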